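(* Let $n=2$, let $G_1,G_2$ satisfy the standing assumptions, and let $f$ be an anonymous BIC SCF, with associated constants $c_1^\pm(f),c_2^\pm(f)$. Then $$p_1c_2^+(f)-(1-p_1)c_2^-(f)\le p_1^2\qquad\text{and}\qquad p_2c_1^+(f)-(1-p_2)c_1^-(f)\le p_2^2.$$
   Context: There are $n\ge 2$ agents $N=\{1,\dots,n\}$ choosing between a Reform $R$ and the Status quo $S$. Agent $i$ gets utility $0$ if $S$ is chosen and utility $v_i\in\mathbb{R}$ if $R$ is chosen. Values are independent random variables $\tilde v_1,\dots,\tilde v_n$, $\tilde v_i\sim G_i$ (Borel probability distributions on $\mathbb{R}$, $G_i(0)=\Pr(\tilde v_i\le 0)$). Standing assumptions: all $\tilde v_i$ have the same support $V$ with $0\notin V$; $\mathbb{E}|\tilde v_i|<\infty$; $p_i:=1-G_i(0)\in(0,1)$. An SCF is a Borel measurable $f:V^n\to[0,1]$ (probability of choosing $R$). $f$ is anonymous if $f(v)=f(\pi v)$ for every $v\in V^n$ and every permutation $\pi$ of $N$, where $\pi v=(v_{\pi(1)},\dots,v_{\pi(n)})$. $f$ is BIC if for every $i$ and all $v_i,v_i'\in V$: $v_i\,\mathbb{E}(f(v_i,\tilde v_{-i}))\ge v_i\,\mathbb{E}(f(v_i',\tilde v_{-i}))$ (expectation over $\tilde v_{-i}=(\tilde v_j)_{j\neq i}$). For a BIC $f$, the map $v_i\mapsto \mathbb{E}(f(v_i,\tilde v_{-i}))$ is constant on $\{v_i\in V:v_i<0\}$ and on $\{v_i\in V: v_i>0\}$;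 $c_i^-(f)$ and $c_i^+(f)$ denote these two constant values, respectively. *)

(* Defs.v *)
From HB Require Import structures.
From mathcomp Require Import all_boot all_order all_algebra.
From mathcomp Require Import all_classical all_reals all_analysis.
Set Implicit Arguments. Unset Strict Implicit. Unset Printing Implicit Defensive.
Import Order.TTheory GRing.Theory Num.Theory.
Import numFieldNormedType.Exports.
Local Open Scope classical_set_scope.
Local Open Scope ring_scope.

Definition support {R : realType} (G : probability R R) : set R :=
  [set x | forall e : R, 0 < e -> (0 < G (ball x e))%E].

(* p_i = 1 - G_i(0) = Pr(v_i > 0). *)
Definition ppos {R : realType} (G : probability R R) : R :=
  fine (G `]0, +oo[%classic).

Definition standing {R : realType} (V : set R) (G : probability R R) : Prop :=
  [/\ support G = V, ~ V 0,
      G.-integrable setT (fun x : R => (x%:E))%E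
    & 0 < ppos G < 1].

(* SCFs are f : R -> R -> R, only their
   restriction to V x V matters. *)
Definition interim1 {R : realType} (V : set R) (G2 : probability R R)
  (f : R -> R -> R) (v1 : R) : R := Rintegral G2 V (fun x => f v1 x).
Definition interim2 {R : realType} (V : set R) (G1 : probability R R)
  (f : R -> R -> R) (v2 : R) : R := Rintegral G1 V (fun x => f x v2).

Definition SCF {R : realType} (V : set R) (f : R -> R -> R) : Prop :=
  measurable_fun (V `*` V) (fun z : R * R => f z.1 z.2) /\
  forall v1 v2, V v1 -> V v2 -> 0 <= f v1 v2 <= 1.

Definition anonymous {R : realType} (V : set R) (f : R -> R -> R) : Prop :=
  forall v1 v2, V v1 -> V v2 -> f v1 v2 = f v2 v1.

Definition BIC {R : realType} (V : set R) (G1 G2 : probability R R)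
  (f : R -> R -> R) : Prop :=
  (forall v1 v1', V v1 -> V v1' ->
     v1 * interim1 V G2 f v1 >= v1 * interim1 V G2 f v1') /\
  (forall v2 v2', V v2 -> V v2' ->
     v2 * interim2 V G1 f v2 >= v2 * interim2 V G1 f v2').

Definition is_cplus1 {R : realType} V (G2 : probability R R) f (c : R) :=
  forall v, V v -> 0 < v -> interim1 V G2 f v = c.
Definition is_cminus1 {R : realType} V (G2 : probability R R) f (c : R) :=
  forall v, V v -> v < 0 -> interim1 V G2 f v = c.
Definition is_cplus2 {R : realType} V (G1 : probability R R) f (c : R) :=
  forall v, V v -> 0 < v -> interim2 V G1 f v = c.
Definition is_cminus2 {R : realType} V (G1 : probability R R) f (c : R) :=
  forall v, V v -> v < 0 -> interim2 V G1 f v = c.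

(* Main.v *)
Require Import Defs.
From HB Require Import structures.
From mathcomp Require Import all_boot all_order all_algebra.
From mathcomp Require Import all_classical all_reals all_analysis.
From mathcomp Require Import measurable_realfun lra.
Import Order.TTheory GRing.Theory Num.Theory.
Import numFieldNormedType.Exports.
Local Open Scope classical_set_scope.
Local Open Scope ring_scope.

Section S.
Context {R : realType}.
Variable G : probability R R.

Let S (k : nat) : set R :=
  match unpickle k with
  | Some (c, r) => if pselect (G (ball (@ratr R c) (@ratr R r)) = 0%E)
                   then ball (@ratr R c) (@ratr R r) else set0
  | None => set0
  end.

Lemma S_meas k : measurable (S k).
Proof.
rewrite /S; destruct (unpickle k) as [[c r]|]; rewrite /=.
- case: (pselect _) => /= _; [exact: measurable_ball|exact: measurable0].
- exact: measurable0.
Qed.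

Lemma S0 k : G (S k) = 0%E.
Proof.
rewrite /S; destruct (unpickle k) as [[c r]|]; rewrite /=; last exact: measure0.
by case: (pselect _) => /= H; [exact: H|exact: measure0].
Qed.

Lemma suppC_eq : ~` Defs.support G = \bigcup_k S k.
Proof.
apply/seteqP; split => x.
- rewrite /Defs.support /= => /existsNP[e] /not_implyP[e0] /negP.
  rewrite -leNgt le_eqVlt (ltNge _ 0%E) measure_ge0 orbF => /eqP He.
  have xin : x \in (ball x e : set R) by apply: mem_set; exact: ballxx.
  have [c [r [/= xB Bs]]] := open_subball_rat (ball_open x e) xin.
  exists (pickle (c, r)); first by [].
  rewrite /S.
  have -> : unpickle (pickle (c, r)) = Some (c, r) by exact: pickleK.
  case: (pselect _) => /= [_|]; first exact: set_mem xB.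
  move=> []; apply: (subset_measure0 _ _ Bs He); exact: measurable_ball.
- move=> [k _]; rewrite /S; destruct (unpickle k) as [[c r]|]; last by [].
  case: (pselect _) => //= H0 xB Hs.
  pose e : R := ratr r - `|ratr c - x|.
  have e0 : 0 < e by rewrite subr_gt0.
  have := Hs e e0.
  suff -> : G (ball x e) = 0%E by rewrite ltxx.
  apply: (subset_measure0 _ _ _ H0); [exact: measurable_ball|exact: measurable_ball|].
  move=> y; rewrite /ball /= /e => hy.
  rewrite -(subrK x (ratr c)) -addrA (le_lt_trans (ler_normD _ _))//.
  move: hy; set a := `|_ - x|; set b := `|_ - y|; lra.
Qed.


Lemma supp_meas : measurable (Defs.support G).
Proof.
rewrite -[Defs.support G]setCK; apply: measurableC; rewrite suppC_eq.
exact: bigcupT_measurable S_meas.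
Qed.

Lemma suppC0 : G (~` Defs.support G) = 0%E.
Proof.
apply/eqP; rewrite eq_le measure_ge0 andbT suppC_eq.
apply: le_trans (measure_sigma_subadditive G S_meas _ _) _.
- exact: bigcupT_measurable S_meas.
- by [].
by rewrite eseries0 // => n _ _; exact: S0.
Qed.
End S.


Section M.
Context {R : realType}.

Variables (V : set R) (G : probability R R) (f : R -> R -> R).
Hypothesis mV : measurable V.
Hypothesis fS : SCF V f.
Hypothesis fA : anonymous V f.

Definition K (S T : set R) : R * R -> \bar R :=
  (fun z => (f z.1 z.2)%:E) \_ (S `*` T).

Lemma K_in S T x y : S x -> T y -> K S T (x, y) = (f x y)%:E.
Proof. by move=> Sx Ty; rewrite /K patchE mem_set. Qed.

Lemma K_out S T x y : ~ (S x /\ T y) -> K S T (x, y) = 0%E.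
Proof.
move=> h; rewrite /K patchE ifF //; apply/negbTE/negP; rewrite inE => -[]/=.
by move=> ? ?; apply: h.
Qed.

Lemma K_ge0 S T z : S `<=` V -> T `<=` V -> (0 <= K S T z)%E.
Proof.
move=> SV TV; case: z => x y.
have [[Sx Ty]|h] := pselect (S x /\ T y); last by rewrite K_out.
by rewrite K_in // lee_fin; case: fS => _ /(_ x y (SV _ Sx) (TV _ Ty))/andP[].
Qed.

Lemma K_meas S T : measurable S -> measurable T -> S `<=` V -> T `<=` V ->
  measurable_fun setT (K S T).
Proof.
move=> mS mT SV TV.
have mST : measurable (S `*` T) by exact: measurableX.
apply/(measurable_restrictT _ mST).
apply/measurable_EFinP; apply: (measurable_funS _ _ fS.1).
  exact: measurableX.
by move=> [x y] [/= Sx Ty]; split; [exact: SV|exact: TV].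
Qed.


Lemma K_sym S T x y : S `<=` V -> T `<=` V -> K S T (x, y) = K T S (y, x).
Proof.
move=> SV TV; have [[Sx Ty]|h] := pselect (S x /\ T y).
  by rewrite !K_in // fA //; [exact: SV|exact: TV].
by rewrite !K_out // => -[? ?]; apply: h.
Qed.

Lemma KU A B T x y : (forall z, A z -> B z -> False) ->
  K (A `|` B) T (x, y) = (K A T (x, y) + K B T (x, y))%E.
Proof.
move=> AB; have [Ty|nTy] := pselect (T y); last first.
  rewrite !K_out ?adde0 //; by move=> [_ /nTy].
have [Ax|nAx] := pselect (A x).
  rewrite (K_in (A `|` B)) ?(K_in (A)) ?(K_out B) ?adde0 //; last by left.
  by move=> [/(AB _ Ax)].
have [Bx|nBx] := pselect (B x).
  rewrite (K_in (A `|` B)) ?(K_in (B)) ?(K_out A) ?add0e //; last by right.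
  by move=> [/nAx].
rewrite !K_out ?adde0 //.
- by move=> [/nBx].
- by move=> [/nAx].
- by move=> [[/nAx|/nBx]].
Qed.

Definition I S T := (\int[G]_y \int[G]_x K S T (x, y))%E.

Lemma Kx_meas S T y : measurable S -> measurable T -> S `<=` V -> T `<=` V ->
  measurable_fun setT (fun x => K S T (x, y)).
Proof. by move=> *; apply: measurable_fun_pair1; exact: K_meas. Qed.

Lemma Gin_meas S T : measurable S -> measurable T -> S `<=` V -> T `<=` V ->
  measurable_fun setT (fun y => \int[G]_x K S T (x, y))%E.
Proof.
move=> *; apply: (measurable_fun_fubini_tonelli_G (K S T)).
  exact: K_meas.
by move=> z; apply: K_ge0.
Qed.

Lemma I_sym S T : measurable S -> measurable T -> S `<=` V -> T `<=` V ->
  I S T = I T S.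
Proof.
move=> mS mT SV TV; rewrite /I -(fubini_tonelli (K S T)).
- apply: eq_integral => x _; apply: eq_integral => y _; exact: K_sym.
- exact: K_meas.
- by move=> z; apply: K_ge0.
Qed.


Lemma I_add A B T : measurable A -> measurable B -> measurable T ->
  A `<=` V -> B `<=` V -> T `<=` V -> (forall z, A z -> B z -> False) ->
  I (A `|` B) T = (I A T + I B T)%E.
Proof.
move=> mA mB mT AV BV TV AB; rewrite /I.
rewrite -ge0_integralD //; last 4 first.
- by move=> y _; apply: integral_ge0 => x _; exact: K_ge0.
- exact: Gin_meas.
- by move=> y _; apply: integral_ge0 => x _; exact: K_ge0.
- exact: Gin_meas.
apply: eq_integral => y _.
rewrite -ge0_integralD //; last 4 first.
- by move=> x _; exact: K_ge0.
- exact: Kx_meas.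
- by move=> x _; exact: K_ge0.
- exact: Kx_meas.
by apply: eq_integral => x _; rewrite KU.
Qed.

Lemma J_eq S T y : S `<=` V -> T y ->
  (\int[G]_(x in S) (f x y)%:E = \int[G]_x K S T (x, y))%E.
Proof.
move=> SV Ty; rewrite integral_mkcond; apply: eq_integral => x _.
rewrite patchE; case: ifPn => [/set_mem Sx|/negP nSx]; first by rewrite K_in.
by rewrite K_out // => -[Sx _]; apply: nSx; exact: mem_set.
Qed.

Lemma I_V_const T c : measurable T -> T `<=` V ->
  (forall y, T y -> \int[G]_(x in V) (f x y)%:E = c%:E)%E ->
  I V T = (c%:E * G T)%E.
Proof.
move=> mT TV Hc; rewrite /I -integral_cst // integral_mkcond.
apply: eq_integral => y _; rewrite patchE; case: ifPn => [/set_mem Ty|/negP nTy].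
  by rewrite -(Hc _ Ty) (J_eq V T y).
rewrite -[RHS](integral0 G setT); apply: eq_integral => x _.
by rewrite K_out // => -[_ Ty]; apply: nTy; exact: mem_set.
Qed.


Lemma K_le1 S T z : S `<=` V -> T `<=` V -> (K S T z <= 1)%E.
Proof.
move=> SV TV; case: z => x y.
have [[Sx Ty]|h] := pselect (S x /\ T y); last by rewrite K_out.
by rewrite K_in // lee_fin; case: fS => _ /(_ x y (SV _ Sx) (TV _ Ty))/andP[].
Qed.

Lemma I_le T : measurable T -> T `<=` V -> (I T T <= G T * G T)%E.
Proof.
move=> mT TV; rewrite /I -integral_cst // integral_mkcond.
apply: ge0_le_integral => //.
- by move=> y _; apply: integral_ge0 => x _; exact: K_ge0.
- exact: Gin_meas.
- by apply/(measurable_restrictT _ mT); exact: measurable_cst.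
move=> y _; rewrite patchE; case: ifPn => [/set_mem Ty|/negP nTy].
  rewrite -[X in (_ <= X)%E]mul1e -integral_cst // integral_mkcond.
  apply: ge0_le_integral => //.
  - by move=> x _; exact: K_ge0.
  - exact: Kx_meas.
  - by apply/(measurable_restrictT _ mT); exact: measurable_cst.
  move=> x _; rewrite patchE; case: ifPn => [/set_mem Tx|/negP nTx].
    exact: K_le1.
  by rewrite K_out // => -[Tx _]; apply: nTx; exact: mem_set.
rewrite (eq_integral (fun _ => 0%E)); first by rewrite integral0.
by move=> x _; rewrite K_out // => -[_ Ty]; apply: nTy; exact: mem_set.
Qed.

Lemma J_fin y : V y -> (\int[G]_(x in V) (f x y)%:E)%E \is a fin_num.
Proof.
move=> Vy; rewrite (J_eq V V y) // ge0_fin_numE; last first.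
  by apply: integral_ge0 => x _; exact: K_ge0.
apply: (@le_lt_trans _ _ 1%E); last exact: ltry.
apply: (@le_trans _ _ (\int[G]_x (cst 1%E) x)%E).
  apply: ge0_le_integral => //.
  - by move=> x _; exact: K_ge0.
  - exact: Kx_meas.
  - by move=> x _; exact: K_le1.
by rewrite integral_cst // mul1e; exact: probability_le1.
Qed.
End M.

Lemma half {R : realType} (V : set R) (G : probability R R) f cp cm :
  standing V G -> SCF V f -> anonymous V f ->
  is_cplus2 V G f cp -> is_cminus2 V G f cm ->
  ppos G * cp - (1 - ppos G) * cm <= ppos G ^+ 2.
Proof.
case=> supp V0 _ /andP[p0 p1] fS fA Hp Hm.
have mV : measurable V by rewrite -supp; exact: supp_meas.
have GVc : G (~` V) = 0%E by rewrite -supp suppC0.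
pose X := `]0, +oo[%classic : set R.
pose Y := `]-oo, 0[%classic : set R.
pose A := V `&` X; pose B := V `&` Y.
have mX : measurable X by exact: measurable_itv.
have mY : measurable Y by exact: measurable_itv.
have mA : measurable A by exact: measurableI.
have mB : measurable B by exact: measurableI.
have AV : A `<=` V by exact: subIsetl.
have BV : B `<=` V by exact: subIsetl.
have AB : forall z, A z -> B z -> False.
  move=> z [_]; rewrite /X /= in_itv /= andbT => z0 [_].
  by rewrite /Y /= in_itv /= => /(lt_trans z0); rewrite ltxx.
have VAB : A `|` B = V.
  apply/seteqP; split; first by move=> z [[]|[]].
  move=> z Vz; have : z != 0 by apply/eqP => z0; apply: V0; rewrite -z0.
  rewrite neq_lt => /orP[zn|zp]; [right|left]; split => //=; rewrite /X /Y /= in_itv /= ?zn ?zp //.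
have GA : G A = (ppos G)%:E.
  have GX : G X = G A.
    rewrite (measureDI G mX mV) setIC.
    rewrite (subset_measure0 (B := ~` V)) ?add0e //.
    - exact: measurableD.
    - exact: measurableC.
  by rewrite /ppos GX fineK //; exact: fin_num_measure.
have GV : G V = 1%E.
  have := probability_setC G mV; rewrite GVc.
  rewrite -(fineK (fin_num_measure _ _ mV)).
  move: (fine (G V)) => v /eqP; rewrite -EFinB eqe eq_sym subr_eq0 => /eqP <-.
  by [].
have GB : G B = (1 - ppos G)%:E.
  have : G (A `|` B) = (G A + G B)%E.
    apply: measureU => //.
    by apply/seteqP; split => // z [Az Bz]; exact: AB Az Bz.
  rewrite VAB GV GA -(fineK (fin_num_measure _ _ mB)).
  move: (fine (G B)) => b /eqP; rewrite -EFinD eqe => /eqP ->.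
  by rewrite addrC addKr.
have HA : forall y, A y -> (\int[G]_(x in V) (f x y)%:E)%E = cp%:E.
  move=> y [Vy Xy]; rewrite -(fineK (@J_fin _ V G f mV fS y Vy)); congr EFin.
  by apply: Hp => //; move: Xy; rewrite /X /= in_itv /= andbT.
have HB : forall y, B y -> (\int[G]_(x in V) (f x y)%:E)%E = cm%:E.
  move=> y [Vy Yy]; rewrite -(fineK (@J_fin _ V G f mV fS y Vy)); congr EFin.
  by apply: Hm => //; move: Yy; rewrite /Y /= in_itv /=.
have e1 := @I_V_const _ V G f A cp mA AV HA.
have e2 := @I_V_const _ V G f B cm mB BV HB.
have e3 := @I_add _ V G f mV fS A B A mA mB mA AV BV AV AB.
have e4 := @I_add _ V G f mV fS A B B mA mB mB AV BV BV AB.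
have e5 := @I_sym _ V G f mV fS fA B A mB mA BV AV.
have le1 := @I_le _ V G f mV fS A mA AV.
have IBB : (0 <= I G f B B)%E.
  by apply: integral_ge0 => y _; apply: integral_ge0 => x _; exact: (@K_ge0 _ V f fS).
rewrite VAB in e3 e4.
have H : (cp%:E * G A <= G A * G A + cm%:E * G B)%E.
  rewrite -e1 -e2 e3 e4 e5; apply: leeD => //; exact: leeDl.
move: H; rewrite GA GB -!EFinM -EFinD lee_fin => H.
rewrite expr2; lra.
Qed.

Theorem lemma2 (R : realType) (V : set R) (G1 G2 : probability R R)
  (f : R -> R -> R) (c1p c1m c2p c2m : R) :
  standing V G1 -> standing V G2 ->
  SCF V f -> anonymous V f -> BIC V G1 G2 f ->
  is_cplus1 V G2 f c1p -> is_cminus1 V G2 f c1m ->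
  is_cplus2 V G1 f c2p -> is_cminus2 V G1 f c2m ->
  ppos G1 * c2p - (1 - ppos G1) * c2m <= ppos G1 ^+ 2 /\
  ppos G2 * c1p - (1 - ppos G2) * c1m <= ppos G2 ^+ 2.
Proof.
move=> s1 s2 fS fA _ h1p h1m h2p h2m; split; first exact: (@half _ V G1 f c2p c2m s1 fS fA h2p h2m).
have e : forall v, V v -> interim1 V G2 f v = interim2 V G2 f v.
  move=> v Vv; rewrite /interim1 /interim2 /Rintegral; congr fine.
  by apply: eq_integral => x /set_mem Vx; rewrite fA.
apply: (@half _ V G2 f c1p c1m s2 fS fA).
- by move=> v Vv v0; rewrite -e //; exact: h1p.
- by move=> v Vv v0; rewrite -e //; exact: h1m.
Qed.
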